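(* Assume the setting below. For every $i\in\mathbb{N}$ let $Y_i,Y_i'\subseteq X_i\setminus\{o\}$ be non-empty disjoint subsets, let $\mathcal{Y}=\prod_{i\ge1}Y_i$, $\mathcal{Y}'=\prod_{i\ge1}Y_i'$ (with the product topology of the discrete finite sets), and let $m_j$ denote the maximal order of an element of $A_j$. Suppose that for every $n\in\mathbb{N}$ there is some $j$ with \[|Y_j|\,|Y_j'|>n\,m_j\,(|Y_j|+|Y_j'|).\] Then the set of shrinking pairs $(\alpha,\beta)$ is dense in $\mathcal{Y}\times\mathcal{Y}'$.
   Context: Setting: $Q,G$ are groups and $X=(X_n)_{n\in\mathbb{N}}$ is a sequence of finite sets with $|X_n|\ge2$, each with actions of $Q$ and $G$; $Q_n,G_n\subseteq\mathrm{Sym}(X_n)$ are the images and $A_n=\langle Q_n,G_n\rangle$. Assume for all $n$: (A1) $G,Q$ finitely generated; (A2) $Q$ perfect; (A3) $A_n$ is transitive on $X_n$ and generated by the $G_n$-conjugates of $Q_n$. $\mathcal{T}_j$ is the rooted tree of finite words $x_j\cdots x_k$ ($x_i\in X_i$), $\mathrm{Aut}(\mathcal{T}_j)$ its root-fixing automorphisms; sections $h|_u\in\mathrm{Aut}(\mathcal{T}_{j+\ell})$ (for $u$ of level $\ell$) are defined by $h(uv)=h(u)h|_u(v)$. $A_j$ acts by rooted automorphisms $a\cdot x_jx_{j+1}\cdots x_k=(ax_j)x_{j+1}\cdots x_k$ and is identified with its image; $q_j,g_j$ denote images of $q\in Q,g\in G$ in $A_j$. A point $o\in X_i$ is fixed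 in each $X_i$; $\mathcal{S}=\prod_{i\ge1}(X_i\setminus\{o\})$. For $\alpha\in\mathcal{S}$, $q\in Q$, $\tilde q^\alpha_{[j]}\in\mathrm{Aut}(\mathcal{T}_j)$ acts trivially on the first level with section at $x\in X_j$ equal to $\tilde q^\alpha_{[j+1]}$ if $x=o$, $q_{j+1}$ if $x=\alpha_j$, identity otherwise; analogously $\tilde g^\beta_{[j]}$ for $\beta\in\mathcal{S}$, $g\in G$. $\tilde Q^\alpha_{[j]},\tilde G^\beta_{[j]}$ are the sets of these elements, $\Gamma_j^{\alpha,\beta}=\langle A_j,\tilde Q^\alpha_{[j]},\tilde G^\beta_{[j]}\rangle$, and $\tilde B^{\alpha,\beta}_j=\tilde Q^\alpha_{[j]}\tilde G^\beta_{[j]}$. Stabilized sections: for $g\in\mathrm{Aut}(\mathcal{T}_j)$ and a vertex $u$, $\ell_u(g)$ is the length of the orbit of $u$ under $\langle g\rangle$ and $g\Vert_u=g^{\ell_u(g)}|_u$. A pair $(\alpha,\beta)\in\mathcal{S}^2$ is shrinking if $\alpha_j\ne\beta_j$ for all $j$ and for each $\gamma\in\Gamma_1^{\alpha,\beta}$ there is $k\in\mathbb{N}$ such that for every vertex $x$ of level $k$ of $\mathcal{T}_1$, $\gamma\Vert_x$ lies in $\tilde B^{\alpha,\beta}_{k+1}$ or in $A_{k+1}$. *)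

(* Defs.v *)
(* Indexing convention: the paper's
   levels i = 1,2,3,... are represented by the natural numbers 0,1,2,...
   (paper index i  <->  Rocq index i-1). *)
From HB Require Import structures.
From mathcomp Require Import all_boot all_fingroup.
From mathcomp Require Import boolp.

Unset Printing Implicit Defensive.

Local Open Scope group_scope.

Inductive ggen (gT : groupType) (S : gT -> Prop) : gT -> Prop :=
  | ggen_in x : S x -> ggen gT S x
  | ggen_one : ggen gT S 1
  | ggen_mul x y : ggen gT S x -> ggen gT S y -> ggen gT S (x * y)
  | ggen_inv x : ggen gT S x -> ggen gT S x^-1.
Arguments ggen {gT} S x.

Definition finitely_generated (gT : groupType) : Prop :=
  exists s : seq gT, forall x : gT, ggen (fun y => y \in s) x.

Definition perfect_group (gT : groupType) : Prop :=
  forall x : gT, ggen (fun y => exists a b : gT, y = [~ a, b]) x.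

Definition is_left_action (gT : groupType) (T : finType)
    (rho : gT -> {perm T}) : Prop :=
  (forall t : T, rho 1 t = t) /\
  (forall (p q : gT) (t : T), rho (p * q) t = rho p (rho q t)).
Arguments is_left_action {gT T} rho.

Definition image_set (gT : groupType) (T : finType) (rho : gT -> {perm T})
  : {set {perm T}} := [set s | `[< exists q : gT, rho q = s >]].
Arguments image_set {gT T} rho.

Section Tree.

Variable X : nat -> finType.

(* words x_j x_{j+1} ... x_{j+l-1} : vertices of level l of T_j *)
Fixpoint word (j l : nat) {struct l} : finType :=
  match l with
  | 0 => unit
  | l'.+1 => (X j * word j.+1 l')%type
  end.

(* the index of the tree T_{j+l} in which sections at level l live *)
Fixpoint lev (j l : nat) {struct l} : nat :=
  match l with 0 => j | l'.+1 => lev j.+1 l' end.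

Fixpoint wcat (l : nat) : forall (j m : nat),
    word j l -> word (lev j l) m -> word j (l + m) :=
  match l return forall (j m : nat),
      word j l -> word (lev j l) m -> word j (l + m) with
  | 0 => fun j m _ v => v
  | l'.+1 => fun j m u v => (u.1, wcat l' j.+1 m u.2 v)
  end.

(* (raw) maps of T_j acting levelwise; automorphisms of T_j are among them *)
Definition aut (j : nat) := forall l : nat, word j l -> word j l.

Definition aone (j : nat) : aut j := fun l w => w.
Definition amul (j : nat) (g h : aut j) : aut j := fun l w => g l (h l w).
Definition ainv (j : nat) (g : aut j) : aut j := fun l w => finv (g l) w.
Definition apow (j : nat) (g : aut j) (n : nat) : aut j :=
  fun l w => iter n (g l) w.

Inductive agen (j : nat) (S : aut j -> Prop) : aut j -> Prop :=
  | agen_in g : S g -> @agen j S g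
  | agen_one : @agen j S (@aone j)
  | agen_mul g h : @agen j S g -> @agen j S h -> @agen j S (amul j g h)
  | agen_inv g : @agen j S g -> @agen j S (ainv j g).

Definition rooted (j : nat) (a : {perm X j}) : aut j :=
  fun l => match l return word j l -> word j l with
           | 0 => fun w => w
           | l'.+1 => fun w => (a w.1, w.2)
           end.


Variable o : forall n, X n.

(* tilde p^alpha_[j] where p n is the image in A_n of a fixed group element *)
Fixpoint tilde_rec (p : forall n, {perm X n}) (alpha : forall n, X n)
    (l : nat) : forall j, word j l -> word j l :=
  match l return forall j, word j l -> word j l with
  | 0 => fun j w => w
  | l'.+1 => fun j w =>
      if w.1 == o j then (w.1, tilde_rec p alpha l' j.+1 w.2)
      else if w.1 == alpha j then (w.1, rooted j.+1 (p j.+1) l' w.2)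
      else w
  end.

Definition tilde (p : forall n, {perm X n}) (alpha : forall n, X n)
    (j : nat) : aut j := fun l => tilde_rec p alpha l j.

Definition is_section (j l : nat) (h : aut j) (u : word j l)
    (f : aut (lev j l)) : Prop :=
  forall (m : nat) (v : word (lev j l) m),
    h (l + m) (wcat l j m u v) = wcat l j m (h l u) (f m v).

Definition orbit_len (j l : nat) (g : aut j) (u : word j l) : nat :=
  fingraph.order (g l) u.

Definition stab_section_in (j l : nat) (g : aut j) (u : word j l)
    (P : aut (lev j l) -> Prop) : Prop :=
  exists f, P f /\ is_section j l (apow j g (orbit_len j l g u)) u f.

End Tree.

Arguments wcat {X l j m} u v.
Arguments aone {X j} l w.
Arguments amul {X j} g h l w.
Arguments ainv {X j} g l w.
Arguments apow {X j} g n l w.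
Arguments agen {X j} S g.
Arguments rooted {X j} a l w.
Arguments tilde {X} o p alpha j l w.
Arguments is_section {X j l} h u f.
Arguments orbit_len {X j l} g u.
Arguments stab_section_in {X j l} g u P.


Section Setting.

Variables (Q G : groupType) (X : nat -> finType).
Variables (rhoQ : forall n, Q -> {perm X n}) (rhoG : forall n, G -> {perm X n}).
Variable o : forall n, X n.

Definition Qn (n : nat) : {set {perm X n}} := image_set (rhoQ n).
Definition Gn (n : nat) : {set {perm X n}} := image_set (rhoG n).
Definition An (n : nat) : {set {perm X n}} := <<Qn n :|: Gn n>>.

Definition max_order (j : nat) : nat := \max_(a in An j) #[a].

Definition qtilde (alpha : forall n, X n) (q : Q) (j : nat) : aut X j :=
  tilde o (fun n => rhoQ n q) alpha j.
Definition gtilde (beta : forall n, X n) (g : G) (j : nat) : aut X j :=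
  tilde o (fun n => rhoG n g) beta j.

Definition Gamma (alpha beta : forall n, X n) (j : nat) : aut X j -> Prop :=
  agen (fun f => (exists a, a \in An j /\ f = rooted a) \/
                 (exists q : Q, f = qtilde alpha q j) \/
                 (exists g : G, f = gtilde beta g j)).

Definition Btilde (alpha beta : forall n, X n) (j : nat) (f : aut X j) : Prop :=
  exists (q : Q) (g : G), f = amul (qtilde alpha q j) (gtilde beta g j).

(* the paper's T_1 is T_0 here; sections at level k live in T_{lev 0 k}
   (= the paper's T_{k+1}) *)
Definition shrinking (alpha beta : forall n, X n) : Prop :=
  (forall j, alpha j != beta j) /\
  forall gamma : aut X 0, Gamma alpha beta 0 gamma ->
    exists k : nat, forall x : word X 0 k,
      stab_section_in gamma x
        (fun f => Btilde alpha beta (lev 0 k) f \/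
                  exists a, a \in An (lev 0 k) /\ f = rooted a).

End Setting.

Arguments Qn {Q X} rhoQ n.
Arguments Gn {G X} rhoG n.
Arguments An {Q G X} rhoQ rhoG n.
Arguments max_order {Q G X} rhoQ rhoG j.
Arguments qtilde {Q X} rhoQ o alpha q j l _.
Arguments gtilde {G X} rhoG o beta g j l _.
Arguments Gamma {Q G X} rhoQ rhoG o alpha beta j _.
Arguments Btilde {Q G X} rhoQ rhoG o alpha beta j f.
Arguments shrinking {Q G X} rhoQ rhoG o alpha beta.

(* Main.v *)
Require Import Defs.
From HB Require Import structures.
From mathcomp Require Import all_boot all_fingroup.
From mathcomp Require Import boolp.

From mathcomp Require Import zify.

Module Aux.

Unset Printing Implicit Defensive.
Local Open Scope group_scope.

Section Gens.
Variables (Q G : groupType) (X : nat -> finType).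
Variables (rhoQ : forall n, Q -> {perm X n}) (rhoG : forall n, G -> {perm X n}).
Variable o : forall n, X n.
Variables (alpha beta : forall n, X n).

Inductive Gen (j : nat) : Type := GR of {perm X j} | GQ of Q | GG of G.
Arguments GR {j}. Arguments GQ {j}. Arguments GG {j}.

Definition sem {j : nat} (s : Gen j) : Defs.aut X j :=
  match s with
  | GR a => rooted a
  | GQ q => qtilde rhoQ o alpha q j
  | GG g => gtilde rhoG o beta g j
  end.

Definition gperm {j} (s : Gen j) : {perm X j} :=
  match s with GR a => a | _ => 1 end.

Definition sec1 {j} (s : Gen j) (x : X j) : Gen j.+1 :=
  match s with
  | GR _ => GR 1
  | GQ q => if x == o j then GQ q else if x == alpha j then GR (rhoQ j.+1 q) else GR 1
  | GG g => if x == o j then GG g else if x == beta j then GR (rhoG j.+1 g) else GR 1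
  end.

Fixpoint secg (l : nat) : forall j, Gen j -> word X j l -> Gen (lev j l) :=
  match l return forall j, Gen j -> word X j l -> Gen (lev j l) with
  | 0 => fun j s _ => s
  | l'.+1 => fun j s v => @secg l' j.+1 (sec1 s v.1) v.2
  end.
Arguments secg {l j}.

Definition sem_w {j} (ws : seq (Gen j)) : Defs.aut X j :=
  foldr (fun s acc => amul (sem s) acc) (@aone X j) ws.

Fixpoint secw {j l} (ws : seq (Gen j)) (v : word X j l) : seq (Gen (lev j l)) :=
  match ws with
  | [::] => [::]
  | s :: ws' => secg s (sem_w ws' l v) :: secw ws' v
  end.

Definition wperm {j} (ws : seq (Gen j)) : {perm X j} :=
  foldr (fun s acc => acc * gperm s) 1 ws.

Fixpoint wjoin (l : nat) : forall j, word X j l -> X (lev j l) -> word X j l.+1 :=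
  match l return forall j, word X j l -> X (lev j l) -> word X j l.+1 with
  | 0 => fun j _ y => (y, tt)
  | l'.+1 => fun j v y => (v.1, @wjoin l' j.+1 v.2 y)
  end.
Arguments wjoin {l j}.

Fixpoint opath (l : nat) : forall j, word X j l :=
  match l return forall j, word X j l with
  | 0 => fun j => tt
  | l'.+1 => fun j => (o j, @opath l' j.+1)
  end.
Arguments opath : clear implicits.

Lemma rooted1E j l (w : word X j l) : rooted 1 l w = w.
Proof. by case: l w => [|l] //= [x w] /=; rewrite perm1. Qed.

Lemma sem0 j (s : Gen j) (w : word X j 0) : sem s 0 w = w.
Proof. by case: s. Qed.

Lemma semS j (s : Gen j) m (x : X j) (w : word X j.+1 m) :
  sem s m.+1 ((x, w) : word X j m.+1) = (gperm s x, sem (sec1 s x) m w).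
Proof.
case: s => [a|q|g] /=.
- by rewrite rooted1E.
- rewrite /qtilde /tilde /= perm1.
  case: eqP => // _; case: eqP => // _ /=; by rewrite rooted1E.
- rewrite /gtilde /tilde /= perm1.
  case: eqP => // _; case: eqP => // _ /=; by rewrite rooted1E.
Qed.


Lemma sem_sec l : forall j (s : Gen j) m (v : word X j l) (w : word X (lev j l) m),
 sem s (l + m) (wcat v w) = wcat (sem s l v) (sem (secg s v) m w).
Proof.
elim: l => [|l IH] j s m v w //=.
case: v => x v /=.
rewrite (semS _ s _ x (wcat v w)).
by rewrite IH (semS _ s _ x v).
Qed.


Lemma sem_join l : forall j (s : Gen j) (v : word X j l) (y : X (lev j l)),
  sem s l.+1 (wjoin v y) = wjoin (sem s l v) (gperm (secg s v) y).
Proof.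
elim: l => [|l IH] j s v y.
  by case: v; rewrite /= (semS _ s 0 y tt) sem0.
case: v => x v /=.
by rewrite (semS _ s _ x (wjoin v y)) IH (semS _ s _ x v).
Qed.

Lemma sem_w_sec j ws l m (v : word X j l) (w : word X (lev j l) m) :
  sem_w ws (l + m) (wcat v w) = wcat (sem_w ws l v) (sem_w (secw ws v) m w).
Proof.
elim: ws => [|s ws IH] //=.
rewrite /amul IH sem_sec //.
Qed.

Lemma sem_w_join j ws l (v : word X j l) (y : X (lev j l)) :
  sem_w ws l.+1 (wjoin v y) = wjoin (sem_w ws l v) (wperm (secw ws v) y).
Proof.
elim: ws => [|s ws IH] /=; first by rewrite perm1.
by rewrite /amul IH sem_join permM.
Qed.

Lemma sem_w_cat j (ws ws' : seq (Gen j)) l w :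
  sem_w (ws ++ ws') l w = sem_w ws l (sem_w ws' l w).
Proof. by elim: ws => [|s ws IH] //=; rewrite /amul IH. Qed.

Lemma secw_cat j l (ws ws' : seq (Gen j)) (v : word X j l) :
  secw (ws ++ ws') v = secw ws (sem_w ws' l v) ++ secw ws' v.
Proof. by elim: ws => [|s ws IH] //=; rewrite IH sem_w_cat. Qed.

Fixpoint ncat {j} (n : nat) (ws : seq (Gen j)) : seq (Gen j) :=
  match n with 0 => [::] | n'.+1 => ws ++ ncat n' ws end.

Lemma sem_w_ncat j n (ws : seq (Gen j)) l w :
  sem_w (ncat n ws) l w = iter n (sem_w ws l) w.
Proof. by elim: n => [|n IH] //=; rewrite sem_w_cat IH. Qed.


Lemma rooted_id j (a : {perm X j}) l w : (forall t, a t = t) -> rooted a l w = w.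
Proof. by case: l w => [|l] //= [x w] /= ->. Qed.

Lemma rooted_comp j (a b c : {perm X j}) l w : (forall t, c t = a (b t)) ->
  rooted a l (rooted b l w) = rooted c l w.
Proof. by case: l w => [|l] //= [x w] /= ->. Qed.

Implicit Types (p : forall n, {perm X n}) (al be : forall n, X n).

Lemma tilde_fst p al l j (w : word X j l.+1) : (tilde_rec X o p al l.+1 j w).1 = w.1.
Proof. by case: w => x w /=; case: ifP => //; case: ifP. Qed.

Lemma tilde_id p al l : forall j w, (forall n t, p n t = t) -> tilde_rec X o p al l j w = w.
Proof.
elim: l => [|l IH] j w hp //=.
case: w => x w /=; case: ifP => _; first by rewrite IH.
by case: ifP => _ //; rewrite rooted_id.
Qed.

Lemma tildeS p al l j (x : X j) (w : word X j.+1 l) :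
  tilde_rec X o p al l.+1 j ((x, w) : word X j l.+1) =
  if x == o j then (x, tilde_rec X o p al l j.+1 w)
  else if x == al j then (x, rooted (p j.+1) l w) else (x, w).
Proof. by []. Qed.

Lemma tilde_hom p (p' p'' : forall n, {perm X n}) al l : forall j w, (forall n t, p'' n t = p n (p' n t)) ->
  tilde_rec X o p al l j (tilde_rec X o p' al l j w) = tilde_rec X o p'' al l j w.
Proof.
elim: l => [|l IH] j w hp //.
case: w => x w; rewrite !tildeS.
have [->|hx] := eqVneq x (o j); first by rewrite tildeS eqxx IH.
have [hxa|ha] := eqVneq x (al j).
  by rewrite tildeS (negbTE hx) hxa eqxx (rooted_comp _ _ _ (p'' j.+1) _ _ (hp j.+1)).
by rewrite tildeS (negbTE hx) (negbTE ha).
Qed.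

Lemma tilde_comm p (p' : forall n, {perm X n}) al be l : forall j w, (forall n, al n != be n) ->
  tilde_rec X o p al l j (tilde_rec X o p' be l j w) =
  tilde_rec X o p' be l j (tilde_rec X o p al l j w).
Proof.
elim: l => [|l IH] j w hab //.
case: w => x w; rewrite !tildeS.
have [->|hx] := eqVneq x (o j); first by rewrite !tildeS eqxx IH.
have [hxa|ha] := eqVneq x (al j).
  have hb : (x == be j) = false by rewrite hxa; apply/negbTE.
  by rewrite hb !tildeS (negbTE hx) hb hxa eqxx.
have [hxb|hb] := eqVneq x (be j).
  by rewrite !tildeS (negbTE hx) (negbTE ha) hxb eqxx.
by rewrite !tildeS (negbTE hx) (negbTE ha) (negbTE hb).
Qed.

Lemma tilde_local p al (al' : forall n, X n) l : forall j w, (forall i, i.+1 < j + l -> al i = al' i) ->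
  tilde_rec X o p al l j w = tilde_rec X o p al' l j w.
Proof.
elim: l => [|l IH] j w h //.
case: w => x w; rewrite !tildeS.
case: l IH h w => [|l] IH h w.
  by rewrite /=; do ![case: ifP].
rewrite (h j); last by lia.
rewrite IH // => i hi; apply: h; lia.
Qed.


Lemma aut_ext j (f g : Defs.aut X j) : (forall l w, f l w = g l w) -> f = g.
Proof.
move=> h; apply: functional_extensionality_dep => l.
by apply: functional_extensionality_dep => w; apply: h.
Qed.

Hypothesis hQ : forall n, is_left_action (rhoQ n).
Hypothesis hG : forall n, is_left_action (rhoG n).

Lemma sem_GR1 j : sem (GR (1 : {perm X j})) = aone.
Proof. by apply: aut_ext => l w; rewrite /= rooted1E. Qed.

Lemma qtilde1 j : qtilde rhoQ o alpha 1 j = aone.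
Proof. apply: aut_ext => l w; apply: tilde_id => n t; exact: (hQ n).1. Qed.

Lemma gtilde1 j : gtilde rhoG o beta 1 j = aone.
Proof. apply: aut_ext => l w; apply: tilde_id => n t; exact: (hG n).1. Qed.

Lemma qtildeM j q q' : amul (qtilde rhoQ o alpha q j) (qtilde rhoQ o alpha q' j) =
  qtilde rhoQ o alpha (q * q') j.
Proof. apply: aut_ext => l w; apply: tilde_hom => n t; exact: (hQ n).2. Qed.

Lemma gtildeM j g g' : amul (gtilde rhoG o beta g j) (gtilde rhoG o beta g' j) =
  gtilde rhoG o beta (g * g') j.
Proof. apply: aut_ext => l w; apply: tilde_hom => n t; exact: (hG n).2. Qed.

Lemma qg_comm j q g : (forall n, alpha n != beta n) ->
  amul (qtilde rhoQ o alpha q j) (gtilde rhoG o beta g j) =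
  amul (gtilde rhoG o beta g j) (qtilde rhoQ o alpha q j).
Proof. move=> hab; apply: aut_ext => l w; exact: tilde_comm. Qed.

Definition isTil {j} (s : Gen j) : bool := match s with GR _ => false | _ => true end.
Definition isR1 {j} (s : Gen j) : bool := match s with GR a => a == 1 | _ => false end.
Definition inAn {j} (s : Gen j) : bool :=
  match s with GR a => a \in An rhoQ rhoG j | _ => false end.

Lemma btilde_word j (ws : seq (Gen j)) : (forall n, alpha n != beta n) ->
  all (fun s => isTil s || isR1 s) ws -> Btilde rhoQ rhoG o alpha beta j (sem_w ws).
Proof.
move=> hab; elim: ws => [|s ws IH] /=.
  by move=> _; exists 1, 1; apply: aut_ext => l w; rewrite qtilde1 gtilde1.
case/andP => hs /IH [q [g ->]].
case: s hs => [a|q0|g0] /=.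
- move/eqP => ->; exists q, g; by apply: aut_ext => l w; rewrite /amul /= rooted1E.
- by move=> _; exists (q0 * q), g; rewrite -qtildeM.
- move=> _; exists q, (g0 * g); rewrite -gtildeM.
  apply: aut_ext => l w; rewrite /amul.
  by rewrite /qtilde /gtilde /tilde [RHS]tilde_comm.
Qed.

Lemma rooted_word j (ws : seq (Gen j)) :
  all inAn ws -> exists a, a \in An rhoQ rhoG j /\ sem_w ws = rooted a.
Proof.
elim: ws => [|s ws IH] /=.
  by move=> _; exists 1; split; [exact: group1 | rewrite -sem_GR1].
case/andP => hs /IH [a [ha ->]].
case: s hs => [b|q0|g0] //= hb.
exists (a * b); split; first exact: groupM.
by apply: aut_ext => l w; rewrite /amul (rooted_comp _ _ _ (a * b)) // => t; rewrite permM.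
Qed.

Definition ginv {j} (s : Gen j) : Gen j :=
  match s with GR a => GR a^-1 | GQ q => GQ q^-1 | GG g => GG g^-1 end.

Lemma sem_ginv j (s : Gen j) l w : sem (ginv s) l (sem s l w) = w.
Proof.
case: s => [a|q|g] /=.
- by rewrite (rooted_comp _ _ _ 1) ?rooted1E // => t; rewrite perm1 permK.
- rewrite /qtilde /tilde (tilde_hom _ _ (fun n => rhoQ n (q^-1 * q))).
    by rewrite tilde_id // => n t; rewrite mulVg (hQ n).1.
  by move=> n t; rewrite (hQ n).2.
- rewrite /gtilde /tilde (tilde_hom _ _ (fun n => rhoG n (g^-1 * g))).
    by rewrite tilde_id // => n t; rewrite mulVg (hG n).1.
  by move=> n t; rewrite (hG n).2.
Qed.

Definition winv {j} (ws : seq (Gen j)) := rev (map ginv ws).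

Lemma sem_winv j (ws : seq (Gen j)) l w : sem_w (winv ws) l (sem_w ws l w) = w.
Proof.
elim: ws w => [|s ws IH] w //=.
rewrite /winv /= rev_cons -cats1 sem_w_cat /= /amul /aone sem_ginv.
exact: IH.
Qed.

Lemma finv_can (T : finType) (f g : T -> T) : cancel f g -> finv f =1 g.
Proof.
move=> fK y; have inj := can_inj fK.
by rewrite -{2}(f_finv inj y) fK.
Qed.

Lemma ainv_sem_w j (ws : seq (Gen j)) : ainv (sem_w ws) = sem_w (winv ws).
Proof. by apply: aut_ext => l w; rewrite /ainv (finv_can _ _ _ (sem_winv j ws l)). Qed.


Definition goodGen {j} (s : Gen j) : bool :=
  match s with GR a => a \in An rhoQ rhoG j | _ => true end.

Lemma sec1_good j (s : Gen j) x : goodGen (sec1 s x).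
Proof.
case: s => [a|q|g] /=; first exact: group1.
- case: ifP => _ //; case: ifP => _ /=; last exact: group1.
  apply: mem_gen; apply/setUP; left; rewrite inE; apply/asboolP; by exists q.
- case: ifP => _ //; case: ifP => _ /=; last exact: group1.
  apply: mem_gen; apply/setUP; right; rewrite inE; apply/asboolP; by exists g.
Qed.

Lemma secg_good l : forall j (s : Gen j) (v : word X j l), goodGen s -> goodGen (secg s v).
Proof. elim: l => [|l IH] j s v //= _; apply: IH; exact: sec1_good. Qed.

Lemma secgS_good l j (s : Gen j) (v : word X j l.+1) : goodGen (secg s v).
Proof. by case: v => x v /=; apply: secg_good; exact: sec1_good. Qed.

Lemma secg_GR1 l : forall j (v : word X j l), secg (GR 1) v = GR 1.
Proof. by elim: l => [|l IH] j v //=. Qed.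

Lemma secg_GR l j (a : {perm X j}) (v : word X j l.+1) : secg (GR a) v = GR 1.
Proof. by rewrite /= secg_GR1. Qed.

Lemma secg_notT l : forall j (s : Gen j) (v : word X j l.+1),
  v != opath l.+1 j -> ~~ isTil (secg s v).
Proof.
elim: l => [|l IH] j s [x v] hv.
  case: v hv => hv /=.
  have hx : x != o j by apply: contra hv => /eqP ->.
  by case: s => [a|q|g] //=; rewrite (negbTE hx); case: ifP.
rewrite /=.
have [hx|hx] := eqVneq x (o j).
  apply: IH; apply: contra hv => /eqP ->; by rewrite hx.
have [a ->] : exists a, sec1 s x = GR a.
  by case: s => [a|q|g] /=; [exists 1 | rewrite (negbTE hx); case: ifP => _; eexists; reflexivity ..].
by rewrite /= secg_GR1.
Qed.

Lemma secg_notRa l : forall j (s : Gen j) (v : word X j l.+1),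
  v != wjoin (opath l j) (alpha (lev j l)) -> v != wjoin (opath l j) (beta (lev j l)) ->
  isTil (secg s v) || isR1 (secg s v).
Proof.
elim: l => [|l IH] j s [x v] ha hb.
  case: v ha hb => ha hb /=.
  have hxa : x != alpha j by apply: contra ha => /eqP ->.
  have hxb : x != beta j by apply: contra hb => /eqP ->.
  case: s => [a|q|g] /=; rewrite ?(negbTE hxa) ?(negbTE hxb) ?eqxx ?orbT //; by case: ifP => _ /=; rewrite ?eqxx ?orbT.
rewrite /=.
have [hx|hx] := eqVneq x (o j).
  apply: IH.
    by apply: contra ha => /eqP ->; rewrite hx.
  by apply: contra hb => /eqP ->; rewrite hx.
have [a ->] : exists a, sec1 s x = GR a.
  by case: s => [a|q|g] /=; [exists 1 | rewrite (negbTE hx); case: ifP => _; eexists; reflexivity ..].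
by rewrite /= secg_GR1 /=.
Qed.


Lemma lev_add l : forall j, lev j l = j + l.
Proof. elim: l => [|l IH] j /=; [by rewrite addn0 | by rewrite IH addSnnS]. Qed.

Lemma wjoin_surj l : forall j (z : word X j l.+1), exists v y, z = wjoin v y.
Proof.
elim: l => [|l IH] j [x z].
  by case: z; exists tt, x.
have [v [y ->]] := IH j.+1 z.
by exists ((x, v) : word X j l.+1), y.
Qed.

Lemma wjoin_inj l : forall j (v v' : word X j l) y y', wjoin v y = wjoin v' y' -> v = v' /\ y = y'.
Proof.
elim: l => [|l IH] j v v' y y' /=.
  by case: v; case: v' => [[]] ->.
case: v v' => x v [x' v'] /= [-> /IH [-> ->]] //.
Qed.

Lemma sem_w_inj j (ws : seq (Gen j)) l : injective (sem_w ws l).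
Proof. exact: can_inj (sem_winv j ws l). Qed.

Lemma wperm_An j l (ws : seq (Gen j)) (v : word X j l) : 0 < l ->
  wperm (secw ws v) \in An rhoQ rhoG (lev j l).
Proof.
case: l v => // l v _.
elim: ws => [|s ws IH]; first exact: group1.
change (wperm (secw ws v) * gperm (secg s (sem_w ws l.+1 v)) \in An rhoQ rhoG (lev j l.+1)).
rewrite groupM //.
have := secgS_good l j s (sem_w ws l.+1 v).
by case: (secg s (sem_w ws l.+1 v)) => [a|q|g] /= h //; exact: group1.
Qed.

Lemma iter_period (T : finType) (h : T -> T) (hinj : injective h) v f :
  iter f h v = v -> fingraph.order h v %| f.
Proof.
move=> hf.
set l := fingraph.order h v.
have l0 : 0 < l by exact: fingraph.order_gt0.
have hq : forall q, iter (q * l) h v = v.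
  elim=> [|q IH] //; by rewrite mulSn iterD IH iter_order.
have : iter (f %% l) h v = v.
  by rewrite -{2}hf {2}(divn_eq f l) addnC iterD hq.
move=> hr.
have := findex_iter (ltn_pmod f l0).
by rewrite hr findex0 /dvdn => <-.
Qed.

Lemma card_bigcup_le (I T : finType) (A : I -> {set T}) :
  #|\bigcup_(i : I) A i| <= \sum_(i : I) #|A i|.
Proof.
apply: (big_ind2 (fun (U : {set T}) n => #|U| <= n)); first by rewrite cards0.
  move=> U1 n1 U2 n2 h1 h2; apply: leq_trans (leq_card_setU U1 U2) _; exact: leq_add.
by [].
Qed.


Lemma card_S (ws ws1 ws2 : seq (Gen 0)) L : 0 < L ->
  #|[set y : X (lev 0 L) | `[< exists e e' x,
      sem_w ws1 L.+1 (iter e (sem_w ws L.+1) x) = opath L.+1 0 /\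
      sem_w ws2 L.+1 (iter e' (sem_w ws L.+1) x) = wjoin (opath L 0) y >]]|
  <= max_order rhoQ rhoG (lev 0 L).
Proof.
move=> hL.
set gam := sem_w ws L.+1.
set gamL := sem_w ws L.
have ginj : injective gam := sem_w_inj 0 ws L.+1.
have gLinj : injective gamL := sem_w_inj 0 ws L.
set T := [set y | _].
have [->|[y0 hy0]] := set_0Vmem T; first by rewrite cards0.
move: hy0; rewrite inE => /asboolP [e0 [e0' [x0 [h01 h02]]]].
set w0 := iter e0 gam x0.
have [vP [y0' hz0]] := wjoin_surj _ _ (iter e0' gam x0).
move: h02; rewrite hz0 sem_w_join => /wjoin_inj [hvP _].
set psi := wperm (secw ws2 vP).
set T' := [set y1 | fconnect gam w0 (wjoin vP y1)].
have sub : T \subset psi @: T'.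
  apply/subsetP => y; rewrite inE => /asboolP [e [e' [x [h1 h2]]]].
  have hw : iter e gam x = w0 by apply: (sem_w_inj 0 ws1 L.+1); rewrite h1 h01.
  have [v [y1 hz]] := wjoin_surj _ _ (iter e' gam x).
  move: h2; rewrite hz sem_w_join => /wjoin_inj [hv <-].
  have ev : v = vP by apply: (sem_w_inj 0 ws2 L); rewrite hv hvP.
  rewrite ev in hz *.
  apply: imset_f; rewrite inE -hz -hw.
  apply: (connect_trans (y := x)).
    by rewrite fconnect_sym //; apply: fconnect_iter.
  by apply: fconnect_iter.
apply: leq_trans (subset_leq_card sub) _.
apply: leq_trans (leq_imset_card _ _) _.
have [->|[y1 hy1]] := set_0Vmem T'; first by rewrite cards0.
set ell := fingraph.order gamL vP.
set phi := wperm (secw (ncat ell ws) vP).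
have hphi : phi \in An rhoQ rhoG (lev 0 L) := wperm_An 0 L (ncat ell ws) vP hL.
have hstep : forall y, iter ell gam (wjoin vP y) = wjoin vP (phi y).
  move=> y; rewrite -sem_w_ncat sem_w_join sem_w_ncat iter_order //.
have hsteps : forall q, iter q (iter ell gam) (wjoin vP y1) = wjoin vP (iter q phi y1).
  by elim=> [|q IH] //=; rewrite IH hstep.
have sub2 : T' \subset [set (phi ^+ k) y1 | k : 'I_#[phi]].
  apply/subsetP => y; rewrite inE => hy.
  move: hy1; rewrite inE => hy1.
  have hc : fconnect gam (wjoin vP y1) (wjoin vP y).
    apply: (connect_trans (y := w0)) hy.
    by rewrite fconnect_sym.
  have hf := iter_findex hc.
  set f := findex gam (wjoin vP y1) (wjoin vP y) in hf.
  have hfv : iter f gamL vP = vP.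
    move: hf; rewrite -sem_w_ncat sem_w_join => /wjoin_inj [+ _].
    by rewrite sem_w_ncat.
  have /dvdnP [q hq] := iter_period _ _ gLinj _ _ hfv.
  move: hf; rewrite hq iterM hsteps => /wjoin_inj [_ <-].
  rewrite -permX -expg_mod_order.
  apply/imsetP; exists (Ordinal (ltn_pmod q (order_gt0 phi))) => //.
apply: leq_trans (subset_leq_card sub2) _.
apply: leq_trans (leq_imset_card _ _) _.
rewrite card_ord.
exact: (leq_bigmax_cond phi hphi).
Qed.


Definition BadF L (F : seq (Gen 0) -> word X 0 L.+1 -> word X 0 L.+1) (ws : seq (Gen 0))
  : {set X (lev 0 L)} :=
  [set y | `[< exists i i' e e' x, (i <= size ws) && (i' <= size ws) /\
       F (drop i ws) (iter e (F ws) x) = opath L.+1 0 /\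
       F (drop i' ws) (iter e' (F ws) x) = wjoin (opath L 0) y >]].

Definition BadS (ws : seq (Gen 0)) L := BadF L (fun ws' => sem_w ws' L.+1) ws.

Lemma card_Bad ws L : 0 < L ->
  #|BadS ws L| <= (size ws).+1 * (size ws).+1 * max_order rhoQ rhoG (lev 0 L).
Proof.
move=> hL.
set R := size ws.
pose S (p : 'I_R.+1 * 'I_R.+1) := [set y : X (lev 0 L) | `[< exists e e' x,
      sem_w (drop p.1 ws) L.+1 (iter e (sem_w ws L.+1) x) = opath L.+1 0 /\
      sem_w (drop p.2 ws) L.+1 (iter e' (sem_w ws L.+1) x) = wjoin (opath L 0) y >]].
have sub : BadS ws L \subset \bigcup_(p : 'I_R.+1 * 'I_R.+1) S p.
  apply/subsetP => y; rewrite inE => /asboolP [i [i' [e [e' [x [/andP [hi hi'] [h1 h2]]]]]]].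
  apply/bigcupP; exists (Ordinal (hi : i < R.+1), Ordinal (hi' : i' < R.+1)) => //.
  by rewrite inE; apply/asboolP; exists e, e', x.
apply: leq_trans (subset_leq_card sub) _.
apply: leq_trans (card_bigcup_le _ _ _) _.
apply: (@leq_trans (\sum_(p : 'I_R.+1 * 'I_R.+1) max_order rhoQ rhoG (lev 0 L))).
  by apply: leq_sum => p _; apply: card_S.
by rewrite sum_nat_const card_prod card_ord.
Qed.


Lemma all_secw j l (ws : seq (Gen j)) (y : word X j l) (P : pred (Gen (lev j l))) :
  (forall i, i < size ws -> P (secg (nth (GR 1) ws i) (sem_w (drop i.+1 ws) l y))) ->
  all P (secw ws y).
Proof.
elim: ws => [|s ws IH] h //=.
apply/andP; split; first by have := h 0 (erefl true); rewrite /= drop0.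
by apply: IH => i hi; exact: (h i.+1 hi).
Qed.

Lemma all_secw_ncat j l (ws : seq (Gen j)) (v : word X j l) n (P : pred (Gen (lev j l))) :
  (forall e i, i < size ws ->
     P (secg (nth (GR 1) ws i) (sem_w (drop i.+1 ws) l (iter e (sem_w ws l) v)))) ->
  all P (secw (ncat n ws) v).
Proof.
move=> h; elim: n => [|n IH] //=.
rewrite secw_cat all_cat IH andbT sem_w_ncat.
by apply: all_secw => i hi; exact: h.
Qed.

Definition dec (gT : groupType) (s : seq gT) (ib : nat * bool) : gT :=
  if ib.2 then (nth 1 s ib.1)^-1 else nth 1 s ib.1.
Arguments dec {gT}.

Definition gval (gT : groupType) (s : seq gT) (ls : seq (nat * bool)) : gT :=
  foldr (fun ib acc => dec s ib * acc) 1 ls.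
Arguments gval {gT}.

Lemma gval_cat (gT : groupType) (s : seq gT) ls1 ls2 :
  gval s (ls1 ++ ls2) = gval s ls1 * gval s ls2.
Proof. by elim: ls1 => [|a ls IH] /=; rewrite ?mul1g // IH mulgA. Qed.

Definition flipb (ib : nat * bool) := (ib.1, ~~ ib.2).

Lemma dec_flip (gT : groupType) (s : seq gT) ib : dec s (flipb ib) = (dec s ib)^-1.
Proof. by case: ib => i [] /=; rewrite /dec /= ?invgK. Qed.

Lemma gval_inv (gT : groupType) (s : seq gT) ls :
  gval s (rev (map flipb ls)) = (gval s ls)^-1.
Proof.
elim: ls => [|a ls IH] /=; first by rewrite invg1.
by rewrite rev_cons -cats1 gval_cat IH /= mulg1 dec_flip invMg.
Qed.

Lemma ggen_word (gT : groupType) (s : seq gT) x :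
  ggen (fun y => y \in s) x -> exists ls, x = gval s ls.
Proof.
elim=> [y hy | | y z _ [l1 ->] _ [l2 ->] | y _ [l ->]].
- by exists [:: (index y s, false)]; rewrite /= /dec /= nth_index // mulg1.
- by exists [::].
- by exists (l1 ++ l2); rewrite gval_cat.
- by exists (rev (map flipb l)); rewrite gval_inv.
Qed.

Variables (sQ : seq Q) (sG : seq G).

Definition Letter := (({perm X 0} + (nat * bool)) + (nat * bool))%type.

Definition decode (c : Letter) : Gen 0 :=
  match c with
  | inl (inl a) => GR a
  | inl (inr ib) => GQ (dec sQ ib)
  | inr ib => GG (dec sG ib)
  end.

Definition linv (c : Letter) : Letter :=
  match c with
  | inl (inl a) => inl (inl a^-1)
  | inl (inr ib) => inl (inr (flipb ib))
  | inr ib => inr (flipb ib)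
  end.

Lemma decode_linv c : decode (linv c) = ginv (decode c).
Proof. by case: c => [[a|ib]|ib] //=; rewrite dec_flip. Qed.

Lemma sem_w_cat_aut j (ws ws' : seq (Gen j)) : sem_w (ws ++ ws') = amul (sem_w ws) (sem_w ws').
Proof. by apply: aut_ext => l w; rewrite sem_w_cat. Qed.

Lemma qword ls : sem_w (map (fun ib => GQ (dec sQ ib)) ls) = qtilde rhoQ o alpha (gval sQ ls) 0.
Proof.
elim: ls => [|a ls IH] /=; first by rewrite qtilde1.
by rewrite IH qtildeM.
Qed.

Lemma gword ls : sem_w (map (fun ib => GG (dec sG ib)) ls) = gtilde rhoG o beta (gval sG ls) 0.
Proof.
elim: ls => [|a ls IH] /=; first by rewrite gtilde1.
by rewrite IH gtildeM.
Qed.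

Hypothesis hsQ : forall x, ggen (fun y => y \in sQ) x.
Hypothesis hsG : forall x, ggen (fun y => y \in sG) x.

Lemma gamma_word f : Gamma rhoQ rhoG o alpha beta 0 f ->
  exists ls : seq Letter, f = sem_w (map decode ls).
Proof.
elim=> [g [[a [_ ->]]|[[q ->]|[g' ->]]] | | g h _ [l1 ->] _ [l2 ->] | g _ [l ->]].
- by exists [:: inl (inl a)]; apply: aut_ext.
- have [ls ->] := ggen_word _ _ _ (hsQ q).
  by exists (map (fun ib => inl (inr ib)) ls); rewrite -map_comp -qword.
- have [ls ->] := ggen_word _ _ _ (hsG g').
  by exists (map (fun ib => inr ib) ls); rewrite -map_comp -gword.
- by exists [::].
- by exists (l1 ++ l2); rewrite map_cat sem_w_cat_aut.
- exists (rev (map linv l)); rewrite ainv_sem_w /winv map_rev -map_comp.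
  by rewrite -map_comp; congr (sem_w (rev _)); apply: eq_map => c; rewrite /= decode_linv.
Qed.

End Gens.

Lemma sem_local (Q G : groupType) (X : nat -> finType)
  (rhoQ : forall n, Q -> {perm X n}) (rhoG : forall n, G -> {perm X n})
  (o al be al' be' : forall n, X n) L (ws : seq (Gen Q G X 0)) w :
  (forall i, i < L -> al i = al' i /\ be i = be' i) ->
  @sem_w Q G X rhoQ rhoG o al be 0 ws L.+1 w = @sem_w Q G X rhoQ rhoG o al' be' 0 ws L.+1 w.
Proof.
move=> h; elim: ws w => [|s ws IH] w //=.
rewrite /amul IH; case: s => [a|q|g] //=.
- rewrite /qtilde /tilde (tilde_local X o _ al al') // => i hi; apply: (h i _).1; by rewrite add0n ltnS in hi.
- rewrite /gtilde /tilde (tilde_local X o _ be be') // => i hi; apply: (h i _).2; by rewrite add0n ltnS in hi.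
Qed.

Lemma BadS_local (Q G : groupType) (X : nat -> finType)
  (rhoQ : forall n, Q -> {perm X n}) (rhoG : forall n, G -> {perm X n})
  (o al be al' be' : forall n, X n) L (ws : seq (Gen Q G X 0)) :
  (forall i, i < L -> al i = al' i /\ be i = be' i) ->
  BadS Q G X rhoQ rhoG o al be ws L = BadS Q G X rhoQ rhoG o al' be' ws L.
Proof.
move=> h; rewrite /BadS; congr BadF.
apply: funext => ws'; apply: funext => w; exact: sem_local.
Qed.

Unset Printing Implicit Defensive.


Local Close Scope group_scope.
Section Main.
Variables (Q G : groupType) (X : nat -> finType).
Variables (rhoQ : forall n, Q -> {perm X n}) (rhoG : forall n, G -> {perm X n}).
Variable o : forall n, X n.
Hypothesis hQ : forall n, is_left_action (rhoQ n).
Hypothesis hG : forall n, is_left_action (rhoG n).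
Variables (sQ : seq Q) (sG : seq G).
Hypothesis hsQ : forall x, ggen (fun y => y \in sQ) x.
Hypothesis hsG : forall x, ggen (fun y => y \in sG) x.
Variables (Y Y' : forall i, {set X i}).
Hypothesis hdisj : forall i, [disjoint Y i & Y' i].
Hypothesis hgrow : forall n : nat, exists j : nat,
     n * max_order rhoQ rhoG j * (#|Y j| + #|Y' j|) < #|Y j| * #|Y' j|.
Variables (a0 b0 : forall i, X i).
Hypothesis ha0 : forall i, a0 i \in Y i.
Hypothesis hb0 : forall i, b0 i \in Y' i.
Variable N : nat.

Local Notation Gen0 := (Gen Q G X 0).
Local Notation LetterT := (({perm X 0} + (nat * bool)) + (nat * bool))%type.

Definition wsOf (t : nat) : seq Gen0 :=
  map (decode Q G X sQ sG) (odflt [::] (@unpickle (seq LetterT) t)).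

Definition Bt t := (size (wsOf t)).+1 * (size (wsOf t)).+1.

Definition cond j n : bool :=
  n * max_order rhoQ rhoG j * (#|Y j| + #|Y' j|) < #|Y j| * #|Y' j|.

Lemma max_order_gt0 j : 0 < max_order rhoQ rhoG j.
Proof.
rewrite /max_order.
have := @leq_bigmax_cond _ (fun a => a \in An rhoQ rhoG j) (fun a : {perm X j} => #[a]%g) 1%g (group1 _).
by rewrite order1.
Qed.

Lemma cond_mono j n n' : n <= n' -> cond j n' -> cond j n.
Proof.
move=> hn; apply: leq_ltn_trans.
by rewrite leq_mul2r leq_mul2r hn !orbT.
Qed.

Lemma ex_level M n : exists j, (M < j) && cond j n.
Proof.
have [j hj] := hgrow (n + \sum_(i < M.+1) #|Y i| * #|Y' i|).
exists j; apply/andP; split; last by apply: cond_mono hj; exact: leq_addr.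
rewrite ltnNge; apply/negP => hjM.
have hs : #|Y j| * #|Y' j| <= \sum_(i < M.+1) #|Y i| * #|Y' i|.
  rewrite (bigD1 (Ordinal (hjM : j < M.+1))) //=; exact: leq_addr.
move: hj hs (max_order_gt0 j).
set a := #|Y j|; set b := #|Y' j|; set S := \sum_(i < M.+1) _; set m := max_order rhoQ rhoG j.
move=> h1 h2 h3.
case: (posnP (a + b)) => hab.
  have az : a = 0 by apply/eqP; move/eqP: hab; rewrite addn_eq0 => /andP [].
  by move: h1; rewrite az mul0n ltn0.
have h4 : S <= (n + S) * m * (a + b).
  by apply: leq_trans (leq_addl n S) _; rewrite -mulnA -{1}[n + S]muln1 leq_mul2l muln_gt0 h3 hab orbT.
by move: (leq_ltn_trans (leq_trans h2 h4) h1); rewrite ltnn.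
Qed.


Definition nextL M n := ex_minn (ex_level M n).

Lemma nextL_spec M n : (M < nextL M n) && cond (nextL M n) n.
Proof. by rewrite /nextL; case: ex_minnP. Qed.

Fixpoint Lv t := match t with 0 => nextL N (Bt 0) | t'.+1 => nextL (Lv t') (Bt t'.+1) end.

Lemma Lv_cond t : cond (Lv t) (Bt t).
Proof.
case: t => [|t] /=; first by have /andP [] := nextL_spec N (Bt 0).
by have /andP [] := nextL_spec (Lv t) (Bt t.+1).
Qed.

Lemma Lv_S t : Lv t < Lv t.+1.
Proof. by rewrite /=; have /andP [] := nextL_spec (Lv t) (Bt t.+1). Qed.

Lemma Lv_ge t : t + N < Lv t.
Proof.
elim: t => [|t IH]; first by rewrite /=; have /andP [] := nextL_spec N (Bt 0).
by apply: leq_trans (Lv_S t); rewrite addSn.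
Qed.

Lemma Lv_mono t t' : t <= t' -> Lv t <= Lv t'.
Proof.
move=> /subnK <-; elim: (t' - t) => [|d IH] //.
by rewrite addSn; apply: leq_trans IH (ltnW (Lv_S _)).
Qed.

Local Notation idx t := (lev 0 (Lv t)).

Lemma idxE t : idx t = Lv t.
Proof. by rewrite lev_add. Qed.

Definition upd (f : forall n, X n) (i : nat) (v : X i) : forall n, X n :=
  fun n => match i =P n with ReflectT e => eq_rect i X v n e | ReflectF _ => f n end.

Lemma upd_prop (P : forall n, X n -> Prop) f i v n :
  P i v -> (forall n, P n (f n)) -> P n (upd f i v n).
Proof. by rewrite /upd; case: eqP => [e|_] //; case: n / e. Qed.

Lemma upd_neq f i v n : n <> i -> upd f i v n = f n.
Proof. by rewrite /upd; case: eqP => // e; move: (esym e). Qed.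

Lemma upd_eq f i v : upd f i v i = v.
Proof.
rewrite /upd; case: eqP => // e.
by rewrite (eq_irrelevance e (erefl i)).
Qed.

Definition chooseA (al be : forall n, X n) t : X (idx t) :=
  odflt (a0 (idx t)) [pick y in Y (idx t) :\: BadS Q G X rhoQ rhoG o al be (wsOf t) (Lv t)].
Definition chooseB (al be : forall n, X n) t : X (idx t) :=
  odflt (b0 (idx t)) [pick y in Y' (idx t) :\: BadS Q G X rhoQ rhoG o al be (wsOf t) (Lv t)].

Fixpoint St t : (forall n, X n) * (forall n, X n) :=
  match t with
  | 0 => (a0, b0)
  | t'.+1 => let p := St t' in
     (upd p.1 (idx t') (chooseA p.1 p.2 t'), upd p.2 (idx t') (chooseB p.1 p.2 t'))
  end.

Definition alpha n := (St n.+1).1 n.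
Definition beta n := (St n.+1).2 n.

Lemma chooseA_mem al be t : chooseA al be t \in Y (idx t).
Proof. by rewrite /chooseA; case: pickP => [y /setDP [] | _] /=. Qed.
Lemma chooseB_mem al be t : chooseB al be t \in Y' (idx t).
Proof. by rewrite /chooseB; case: pickP => [y /setDP [] | _] /=. Qed.

Lemma St_mem t n : (St t).1 n \in Y n /\ (St t).2 n \in Y' n.
Proof.
elim: t n => [|t IH] n /=; first by [].
split.
  by apply: (upd_prop (fun n x => x \in Y n)); [exact: chooseA_mem | move=> k; case: (IH k)].
by apply: (upd_prop (fun n x => x \in Y' n)); [exact: chooseB_mem | move=> k; case: (IH k)].
Qed.

Lemma St_small t n : n < N -> (St t).1 n = a0 n /\ (St t).2 n = b0 n.
Proof.
move=> hn; elim: t => [|t [IH1 IH2]] //=.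
have ne : n <> idx t by rewrite idxE => e; move: (Lv_ge t); rewrite -e; lia.
by rewrite !upd_neq.
Qed.


Lemma St_stab t d n : n < idx t -> (St (t + d)).1 n = (St t).1 n /\ (St (t + d)).2 n = (St t).2 n.
Proof.
move=> hn; elim: d => [|d [IH1 IH2]]; first by rewrite addn0.
rewrite addnS /=.
have ne : n <> idx (t + d).
  move=> e; move: hn; rewrite e !idxE => h.
  have := Lv_mono t (t + d) (leq_addr _ _); lia.
by rewrite !upd_neq.
Qed.

Lemma alpha_agree t n : n < idx t -> alpha n = (St t).1 n /\ beta n = (St t).2 n.
Proof.
move=> hn; rewrite /alpha /beta.
case: (leqP t n.+1) => h.
  by rewrite -(subnKC h); apply: St_stab.
have hn' : n < idx n.+1.
  by rewrite idxE; move: (Lv_ge n.+1); lia.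
have := St_stab n.+1 (t - n.+1) n hn'; rewrite subnKC; last exact: ltnW.
by case=> -> ->.
Qed.

Lemma alpha_idx t : alpha (idx t) = chooseA (St t).1 (St t).2 t /\
  beta (idx t) = chooseB (St t).1 (St t).2 t.
Proof.
have h : idx t < idx t.+1 by rewrite !idxE; exact: Lv_S.
have [-> ->] := alpha_agree t.+1 (idx t) h.
by rewrite /= !upd_eq.
Qed.


Lemma cond_split j n : cond j n ->
  n * max_order rhoQ rhoG j < #|Y j| /\ n * max_order rhoQ rhoG j < #|Y' j|.
Proof.
rewrite /cond; set a := #|Y j|; set b := #|Y' j|; set k := n * _.
move=> h; split; rewrite ltnNge; apply/negP => h2; move: h; rewrite ltnNge; apply/negP/negPn.
- apply: leq_trans (leq_mul h2 (leqnn b)) _; rewrite leq_mul2l leq_addl orbT //.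
- apply: leq_trans (leq_mul (leqnn a) h2) _; rewrite mulnC leq_mul2l leq_addr orbT //.
Qed.


Lemma choose_good t :
  chooseA (St t).1 (St t).2 t \notin BadS Q G X rhoQ rhoG o (St t).1 (St t).2 (wsOf t) (Lv t) /\
  chooseB (St t).1 (St t).2 t \notin BadS Q G X rhoQ rhoG o (St t).1 (St t).2 (wsOf t) (Lv t).
Proof.
set Bd := BadS _ _ _ _ _ _ _ _ _ _.
have hb : #|Bd| <= Bt t * max_order rhoQ rhoG (idx t).
  apply: card_Bad => //; move: (Lv_ge t); lia.
have hcond : cond (idx t) (Bt t) by rewrite idxE; exact: Lv_cond.
have [c1 c2] := cond_split _ _ hcond.
have pos : forall (A : {set X (idx t)}), #|Bd| < #|A| -> 0 < #|A :\: Bd|.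
  move=> A hA; rewrite cardsD subn_gt0.
  by apply: leq_ltn_trans (subset_leq_card (subsetIr A Bd)) hA.
split.
  rewrite /chooseA; case: pickP => [y /setDP [] // | h0] /=.
  have := pos (Y (idx t)) (leq_ltn_trans hb c1).
  by rewrite (eq_card0 h0).
rewrite /chooseB; case: pickP => [y /setDP [] // | h0] /=.
have := pos (Y' (idx t)) (leq_ltn_trans hb c2).
by rewrite (eq_card0 h0).
Qed.


Lemma ab_shrinking : shrinking rhoQ rhoG o alpha beta.
Proof.
have hab : forall n, alpha n != beta n.
  move=> n; apply/negP => /eqP e.
  have [h1 h2] := St_mem n.+1 n.
  move: (disjointFr (hdisj n) h1).
  by rewrite -/(alpha n) e; move: h2; rewrite -/(beta n) => ->.
split => // gam hgam.
have [ls ->] := gamma_word Q G X rhoQ rhoG o alpha beta hQ hG sQ sG hsQ hsG gam hgam.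
set t := pickle ls.
have hws : wsOf t = map (decode Q G X sQ sG) ls by rewrite /wsOf /t pickleK.
rewrite -hws; set ws := wsOf t.
have [gA gB] : alpha (idx t) \notin BadS Q G X rhoQ rhoG o alpha beta ws (Lv t) /\
               beta (idx t) \notin BadS Q G X rhoQ rhoG o alpha beta ws (Lv t).
  have -> : BadS Q G X rhoQ rhoG o alpha beta ws (Lv t) =
            BadS Q G X rhoQ rhoG o (St t).1 (St t).2 ws (Lv t).
    apply: BadS_local => i hi; apply: alpha_agree; by rewrite idxE.
  have [-> ->] := alpha_idx t; exact: choose_good.
exists (Lv t).+1 => x.
rewrite /stab_section_in; set n := orbit_len _ x.
exists (sem_w Q G X rhoQ rhoG o alpha beta
          (secw Q G X rhoQ rhoG o alpha beta (ncat Q G X n ws) x)).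
split; last first.
  by move=> m v; rewrite /apow -!sem_w_ncat; exact: sem_w_sec.
set L := Lv t in gA gB *.
case: (pselect (exists e i, i < size ws /\
   sem_w Q G X rhoQ rhoG o alpha beta (drop i.+1 ws) L.+1
     (iter e (sem_w Q G X rhoQ rhoG o alpha beta ws L.+1) x) = opath X o L.+1 0))
  => [[e [i [hi he]]] | hno].
- left; apply: (btilde_word Q G X rhoQ rhoG o alpha beta hQ hG) => //.
  apply: all_secw_ncat => e' i' hi'.
  apply: secg_notRa.
  + apply/eqP => heq; apply: (negP gA); rewrite inE; apply/asboolP.
    exists i.+1, i'.+1, e, e', x; split; first by rewrite hi hi'.
    by split.
  + apply/eqP => heq; apply: (negP gB); rewrite inE; apply/asboolP.
    exists i.+1, i'.+1, e, e', x; split; first by rewrite hi hi'.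
    by split.
- right.
  have [a [ha ->]] : exists a, a \in An rhoQ rhoG (lev 0 L.+1) /\
    sem_w Q G X rhoQ rhoG o alpha beta
          (secw Q G X rhoQ rhoG o alpha beta (ncat Q G X n ws) x) = rooted a.
    apply: rooted_word.
    apply: all_secw_ncat => e' i' hi'.
    set v := sem_w _ _ _ _ _ _ _ _ (drop i'.+1 ws) L.+1 _.
    have hv : v != opath X o L.+1 0.
      by apply/eqP => hv; apply: hno; exists e', i'.
    have h1 := secg_notT Q G X rhoQ rhoG o alpha beta L 0 (nth (GR Q G X 0 1) ws i') v hv.
    have h2 := secgS_good Q G X rhoQ rhoG o alpha beta L 0 (nth (GR Q G X 0 1) ws i') v.
    by move: h1 h2; case: (secg _ _ _ _ _ _ _ _ _ _ _ _) => [b|q|g].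
  by exists a.
Qed.

End Main.

End Aux.
Import Aux.

Theorem proposition2p5
  (Q G : groupType) (X : nat -> finType)
  (rhoQ : forall n, Q -> {perm X n}) (rhoG : forall n, G -> {perm X n})
  (o : forall n, X n)
  (hX : forall n, 1 < #|X n|)
  (hQact : forall n, is_left_action (rhoQ n))
  (hGact : forall n, is_left_action (rhoG n))
  (hA1Q : finitely_generated Q) (hA1G : finitely_generated G)
  (hA2 : perfect_group Q)
  (hA3t : forall n, [transitive An rhoQ rhoG n, on [set: X n] | 'P])
  (hA3g : forall n,
     An rhoQ rhoG n = (<< \bigcup_(g in Gn rhoG n) (Qn rhoQ n :^ g) >>)%g)
  (Y Y' : forall i, {set X i})
  (hYne : forall i, Y i != set0) (hY'ne : forall i, Y' i != set0)
  (hYo : forall i, o i \notin Y i) (hY'o : forall i, o i \notin Y' i)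
  (hdisj : forall i, [disjoint Y i & Y' i])
  (hgrow : forall n : nat, exists j : nat,
     n * max_order rhoQ rhoG j * (#|Y j| + #|Y' j|) < #|Y j| * #|Y' j|) :
  forall (a0 b0 : forall i, X i),
    (forall i, a0 i \in Y i) -> (forall i, b0 i \in Y' i) ->
    forall N : nat,
      exists alpha beta : forall i, X i,
        (forall i, alpha i \in Y i) /\ (forall i, beta i \in Y' i) /\
        (forall i, i < N -> alpha i = a0 i /\ beta i = b0 i) /\
        shrinking rhoQ rhoG o alpha beta.
Proof.
move=> a0 b0 ha0 hb0 N.
have [sQ hsQ] := hA1Q.
have [sG hsG] := hA1G.
exists (alpha Q G X rhoQ rhoG o sQ sG Y Y' hgrow a0 b0 N),
       (beta Q G X rhoQ rhoG o sQ sG Y Y' hgrow a0 b0 N).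
split; [| split; [| split]].
- move=> i; exact: (St_mem Q G X rhoQ rhoG o sQ sG Y Y' hgrow a0 b0 ha0 hb0 N i.+1 i).1.
- move=> i; exact: (St_mem Q G X rhoQ rhoG o sQ sG Y Y' hgrow a0 b0 ha0 hb0 N i.+1 i).2.
- move=> i hi; exact: St_small.
- exact: ab_shrinking.
Qed.
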